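(* Let $(\mathcal X_S,\mathcal X_O,\mathcal X_A,\mathfrak p,\mathbf r)$ be a POMDP and $T\in\mathbb Z_+$. The linear relaxation of the MILP is equivalent to the MDP approximation LP: from any feasible solution of either one can build a feasible solution of the other with the same objective value; in particular $z^*_{\mathrm R}=v^*_{\mathrm{MDP}}$. Moreover $$z^*_{\mathrm{MILP}}\le v^*_{\mathrm{his}}\le z^*_{\mathrm R^{\mathrm c}}\le z^*_{\mathrm R}=v^*_{\mathrm{MDP}}.$$
   Context: A POMDP has finite spaces $\mathcal X_S,\mathcal X_O,\mathcal X_A$, initial distribution $p(s)$, emissions $p(o|s)$, transitions $p(s'|s,a)$, reward $r(s,a,s')$; $T$ is a horizon. A history-dependent policy is $\delta=(\delta^t_{a|h})$, $h\in(\mathcal X_O\times\mathcal X_A)^{t-1}\times\mathcal X_O$, $\delta^t_{a|h}\ge0$, $\sum_a\delta^t_{a|h}=1$; it induces $\mathbb P_\delta$ with $\mathbb P_\delta(\text{trajectory})=p(s_1)\prod_{t=1}^T p(o_t|s_t)p(s_{t+1}|s_t,a_t)\delta^t_{a_t|h_t}$, $h_t=(o_1,a_1,\dots,a_{t-1},o_t)$; $v^*_{\mathrm{his}}$ is the maximum of $\mathbb E_\delta[\sum_{t=1}^T r(S_t,A_t,S_{t+1})]$ over such policies. $\mathcal Q^{\mathrm d}$: pairs $(\mu,\delta)$ with $\delta^t_{a|o}\in\{0,1\}$, $\sum_a\delta^t_{a|o}=1$, nonnegative $\mu=((\mu^1_s),(\mu^t_{soa}),(\mu^t_{sas'}))$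 with (i) $\mu^1_s=p(s)$; (ii) $\sum_{o,a}\mu^t_{soa}=\nu^t_s$ where $\nu^1_s=\mu^1_s$, $\nu^t_s=\sum_{s'',a''}\mu^{t-1}_{s''a''s}$ ($t\ge2$); (iii) $\sum_{\bar s}\mu^t_{sa\bar s}=\sum_o\mu^t_{soa}$; (iv) $\mu^t_{sas'}=p(s'|s,a)\sum_{\bar s}\mu^t_{sa\bar s}$; (McCormick) $\mu^t_{soa}\le p(o|s)\nu^t_s$, $\mu^t_{soa}\le\delta^t_{a|o}$, $\mu^t_{soa}\ge p(o|s)\nu^t_s+\delta^t_{a|o}-1$. The MILP maximizes $\sum_t\sum_{s,a,s'}r(s,a,s')\mu^t_{sas'}$ over $\mathcal Q^{\mathrm d}$, value $z^*_{\mathrm{MILP}}$. $z^*_{\mathrm R}$ is the value of its linear relaxation ($\delta^t_{a|o}\in[0,1]$), and $z^*_{\mathrm R^{\mathrm c}}$ the value of that linear relaxation with additional nonnegative variables $\mu^t_{s'a'soa}$ ($t\ge2$) and the constraints: $\sum_{s',a'}\mu^t_{s'a'soa}=\mu^t_{soa}$; $\sum_a\mu^t_{s'a'soa}=p(o|s)\mu^{t-1}_{s'a's}$; $\mu^t_{s'a'soa}=p(s|s',a',o)\sum_{\bar s}\mu^t_{s'a'\bar soa}$ with $p(s|s',a',o)=p(o|s)p(s|s',a')/\sum_{\bar s}p(o|\bar s)p(\bar s|s',a')$. The MDP approximation LP: maximize $\sum_t\sum_{s,a,s'}r(s,a,s')\mu^t_{sas'}$ over nonnegative $(\mu^1_s),(\mu^t_{sas'})$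 with $\mu^1_s=p(s)$, $\sum_{a,s'}\mu^1_{sas'}=\mu^1_s$, $\sum_{a,s'}\mu^t_{sas'}=\sum_{s'',a''}\mu^{t-1}_{s''a''s}$ for $t\ge2$, and $\mu^t_{sas'}=p(s'|s,a)\sum_{\bar s}\mu^t_{sa\bar s}$; its value is $v^*_{\mathrm{MDP}}$. *)

(* Defs.v *)
From HB Require Import structures.
From mathcomp Require Import all_boot all_order all_algebra.
From mathcomp Require Import classical_sets reals.
Set Implicit Arguments. Unset Strict Implicit. Unset Printing Implicit Defensive.
Import Order.TTheory GRing.Theory Num.Theory.
Local Open Scope ring_scope.
Local Open Scope classical_set_scope.

(* A finite POMDP: initial distribution p(s), emissions p(o|s),
   transitions p(s'|s,a) and reward r(s,a,s'). *)
Record pomdp (R : realType) (S O A : finType) := Pomdp {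
  p0 : S -> R;
  pe : S -> O -> R;
  pt : S -> A -> S -> R;
  rw : S -> A -> S -> R }.

Section POMDP.
Context (R : realType) (S O A : finType) (P : pomdp R S O A) (T : nat).

Definition is_pomdp : Prop :=
  (forall s, 0 <= p0 P s) /\ \sum_s p0 P s = 1 /\
  (forall s o, 0 <= pe P s o) /\ (forall s, \sum_o pe P s o = 1) /\
  (forall s a s', 0 <= pt P s a s') /\ (forall s a, \sum_s' pt P s a s' = 1).

(* Time indices t range over 1..T; variables are functions of t : nat. *)

Definition objective (muT : nat -> S -> A -> S -> R) : R :=
  \sum_(1 <= t < T.+1) \sum_s \sum_a \sum_s' rw P s a s' * muT t s a s'.

Definition nuv (mu1 : S -> R) (muT : nat -> S -> A -> S -> R) (t : nat) (s : S) : R :=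
  if t == 1%N then mu1 s else \sum_(s'' : S) \sum_(a'' : A) muT t.-1 s'' a'' s.

Definition milp_feasible (integral : bool) (mu1 : S -> R)
  (muO : nat -> S -> O -> A -> R) (muT : nat -> S -> A -> S -> R)
  (del : nat -> O -> A -> R) : Prop :=
  (forall s, 0 <= mu1 s) /\
  (forall s, mu1 s = p0 P s) /\
  forall t, (1 <= t <= T)%N ->
    (forall o a, if integral then (del t o a = 0 \/ del t o a = 1)
                 else (0 <= del t o a /\ del t o a <= 1)) /\
    (forall o, \sum_a del t o a = 1) /\
    (forall s o a, 0 <= muO t s o a) /\
    (forall s a s', 0 <= muT t s a s') /\
    (forall s, \sum_o \sum_a muO t s o a = nuv mu1 muT t s) /\
    (forall s a, \sum_sb muT t s a sb = \sum_o muO t s o a) /\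
    (forall s a s', muT t s a s' = pt P s a s' * \sum_sb muT t s a sb) /\
    (forall s o a, muO t s o a <= pe P s o * nuv mu1 muT t s) /\
    (forall s o a, muO t s o a <= del t o a) /\
    (forall s o a, pe P s o * nuv mu1 muT t s + del t o a - 1 <= muO t s o a).

(* p(s | s', a', o) = p(o|s) p(s|s',a') / sum_sb p(o|sb) p(sb|s',a')
   (with MathComp's convention x / 0 = 0). *)
Definition pcond (s' : S) (a' : A) (o : O) (s : S) : R :=
  pe P s o * pt P s' a' s / \sum_sb pe P sb o * pt P s' a' sb.

Definition rc_extra (muO : nat -> S -> O -> A -> R) (muT : nat -> S -> A -> S -> R)
  (muC : nat -> S -> A -> S -> O -> A -> R) : Prop :=
  forall t, (2 <= t <= T)%N ->
    (forall s' a' s o a, 0 <= muC t s' a' s o a) /\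
    (forall s o a, \sum_s' \sum_a' muC t s' a' s o a = muO t s o a) /\
    (forall s' a' s o, \sum_a muC t s' a' s o a = pe P s o * muT t.-1 s' a' s) /\
    (forall s' a' s o a,
       muC t s' a' s o a = pcond s' a' o s * \sum_sb muC t s' a' sb o a).

Definition mdp_feasible (mu1 : S -> R) (muT : nat -> S -> A -> S -> R) : Prop :=
  (forall s, 0 <= mu1 s) /\
  (forall s, mu1 s = p0 P s) /\
  (forall t, (1 <= t <= T)%N -> forall s a s', 0 <= muT t s a s') /\
  (forall s, \sum_a \sum_s' muT 1%N s a s' = mu1 s) /\
  (forall t, (2 <= t <= T)%N -> forall s,
     \sum_a \sum_s' muT t s a s' = \sum_(s'' : S) \sum_(a'' : A) muT t.-1 s'' a'' s) /\
  (forall t, (1 <= t <= T)%N -> forall s a s',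
     muT t s a s' = pt P s a s' * \sum_sb muT t s a sb).

Definition z_MILP : R := sup [set x | exists mu1 muO muT del,
  milp_feasible true mu1 muO muT del /\ x = objective muT].
Definition z_R : R := sup [set x | exists mu1 muO muT del,
  milp_feasible false mu1 muO muT del /\ x = objective muT].
Definition z_Rc : R := sup [set x | exists mu1 muO muT del muC,
  milp_feasible false mu1 muO muT del /\ rc_extra muO muT muC /\ x = objective muT].
Definition v_MDP : R := sup [set x | exists mu1 muT,
  mdp_feasible mu1 muT /\ x = objective muT].

(* History-dependent policies: delta t h o a = delta^t_{a | (h, o)}, where h is
   the list of past (observation, action) pairs (o_1,a_1),...,(o_{t-1},a_{t-1}). *)
Definition hpolicy := nat -> seq (O * A) -> O -> A -> R.

Definition is_hpolicy (d : hpolicy) : Prop :=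
  forall t h o, (forall a, 0 <= d t h o a) /\ \sum_a d t h o a = 1.

(* Trajectories: states s_1..s_{T+1} (index i <-> s_{i+1}),
   observations and actions o_1..o_T, a_1..a_T (index i <-> time i+1). *)
Definition hist (os : {ffun 'I_T -> O}) (acts : {ffun 'I_T -> A}) (i : 'I_T) : seq (O * A) :=
  map (fun j : 'I_T => (os j, acts j)) (filter (fun j : 'I_T => (j < i)%N) (enum 'I_T)).

Definition traj_prob (d : hpolicy) (ss : {ffun 'I_T.+1 -> S})
  (os : {ffun 'I_T -> O}) (acts : {ffun 'I_T -> A}) : R :=
  p0 P (ss ord0) *
  \prod_(i < T) (pe P (ss (widen_ord (leqnSn T) i)) (os i) *
                 pt P (ss (widen_ord (leqnSn T) i)) (acts i) (ss (lift ord0 i)) *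
                 d i.+1 (hist os acts i) (os i) (acts i)).

Definition traj_reward (ss : {ffun 'I_T.+1 -> S}) (acts : {ffun 'I_T -> A}) : R :=
  \sum_(i < T) rw P (ss (widen_ord (leqnSn T) i)) (acts i) (ss (lift ord0 i)).

Definition his_value (d : hpolicy) : R :=
  \sum_(ss : {ffun 'I_T.+1 -> S}) \sum_(os : {ffun 'I_T -> O})
    \sum_(acts : {ffun 'I_T -> A}) traj_prob d ss os acts * traj_reward ss acts.

Definition v_his : R := sup [set x | exists d, is_hpolicy d /\ x = his_value d].

End POMDP.

(* Main.v *)
Require Import Defs.
From HB Require Import structures.
From mathcomp Require Import all_boot all_order all_algebra.
From mathcomp Require Import classical_sets reals.
From mathcomp Require Import lra ring.
Set Implicit Arguments. Unset Strict Implicit. Unset Printing Implicit Defensive.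
Import Order.TTheory GRing.Theory Num.Theory.
Local Open Scope ring_scope.

Section Gen.
Context (R : realType).

Lemma sum_ind (I : finType) (c : I) (H : I -> R) :
  \sum_(s : I) (c == s)%:R * H s = H c.
Proof.
rewrite (bigD1 c) //= eqxx mul1r big1 ?addr0 // => s /negbTE.
by rewrite eq_sym => ->; rewrite mul0r.
Qed.

Lemma le1_of_sum (I : finType) (f : I -> R) i :
  (forall j, 0 <= f j) -> \sum_j f j = 1 -> f i <= 1.
Proof.
move=> h0 h1; rewrite -h1 (bigD1 i) //= lerDl; exact: sumr_ge0.
Qed.

Lemma sum_pair (I J : finType) (F : I * J -> R) :
  \sum_(x : I * J) F x = \sum_i \sum_j F (i, j).
Proof. by rewrite pair_big; apply: eq_bigr => -[]. Qed.

End Gen.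

Section Ex.
Context (R : realType) (S O A : finType) (P : pomdp R S O A).
Local Notation X := ((O * A) * S)%type.

Definition cur (s0 : S) (p : seq X) : S := last s0 (map snd p).
Definition hp (p : seq X) : seq (O * A) := map fst p.
Definition K (d : hpolicy R O A) (s0 : S) (p : seq X) (x : X) : R :=
  pe P (cur s0 p) x.1.1 * pt P (cur s0 p) x.1.2 x.2 * d (size p).+1 (hp p) x.1.1 x.1.2.

Fixpoint Ex d s0 (p : seq X) (m : nat) (F : seq X -> R) : R :=
  if m is m'.+1 then \sum_x K d s0 p x * Ex d s0 (rcons p x) m' F else F p.

Variables (d : hpolicy R O A) (s0 : S).
Hypothesis (HP : is_pomdp P) (Hd : is_hpolicy d).

Lemma K_ge0 p x : 0 <= K d s0 p x.
Proof.
case: HP => _ [_ [he [_ [ht _]]]]; rewrite /K.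
by rewrite !mulr_ge0 //; case: (Hd (size p).+1 (hp p) x.1.1).
Qed.

Lemma K_sum p : \sum_x K d s0 p x = 1.
Proof.
case: HP => _ [_ [he [he1 [ht ht1]]]].
rewrite sum_pair sum_pair -[RHS](he1 (cur s0 p)); apply: eq_bigr => o _.
have [_ h1] := Hd (size p).+1 (hp p) o.
rewrite -[RHS]mulr1 -h1 mulr_sumr; apply: eq_bigr => a _.
rewrite /K /=.
rewrite (eq_bigr (fun s => pe P (cur s0 p) o * d (size p).+1 (hp p) o a * pt P (cur s0 p) a s)); last by move=> s _; rewrite mulrAC.
by rewrite -mulr_sumr ht1 mulr1.
Qed.

Lemma Ex_ext p m F G : (forall q, size q = (size p + m)%N -> F q = G q) ->
  Ex d s0 p m F = Ex d s0 p m G.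
Proof.
elim: m p => [|m IH] p h /=; first by apply: h; rewrite addn0.
apply: eq_bigr => x _; congr (_ * _); apply: IH => q.
by rewrite size_rcons addSnnS; apply: h.
Qed.

Lemma Ex_sum (I : Type) (r : seq I) (Pi : pred I) p m (F : I -> seq X -> R) :
  Ex d s0 p m (fun q => \sum_(i <- r | Pi i) F i q) =
  \sum_(i <- r | Pi i) Ex d s0 p m (F i).
Proof.
elim: m p => [|m IH] p //=.
rewrite exchange_big; apply: eq_bigr => x _; by rewrite IH mulr_sumr.
Qed.

Lemma Ex_scale p m c F : Ex d s0 p m (fun q => c * F q) = c * Ex d s0 p m F.
Proof.
elim: m p => [|m IH] p //=; rewrite mulr_sumr; apply: eq_bigr => x _.
by rewrite IH mulrCA.
Qed.

Lemma Ex_le p m F G : (forall q, F q <= G q) -> Ex d s0 p m F <= Ex d s0 p m G.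
Proof.
move=> h; elim: m p => [|m IH] p //=; apply: ler_sum => x _.
by apply: ler_wpM2l; [exact: K_ge0| exact: IH].
Qed.

Lemma Ex_ge0 p m F : (forall q, 0 <= F q) -> 0 <= Ex d s0 p m F.
Proof.
move=> h; elim: m p => [|m IH] p //=; apply: sumr_ge0 => x _.
by apply: mulr_ge0; [exact: K_ge0| exact: IH].
Qed.

Lemma Ex_const p m F c : (forall q, F (p ++ q) = c) -> Ex d s0 p m F = c.
Proof.
elim: m p => [|m IH] p h /=; first by rewrite -(h [::]) cats0.
rewrite (eq_bigr (fun x => K d s0 p x * c)); first by rewrite -mulr_suml K_sum mul1r.
move=> x _; rewrite IH // => q; by rewrite -cats1 -catA.
Qed.

Lemma Ex_rcons p m F :
  Ex d s0 p m.+1 F = Ex d s0 p m (fun q => \sum_x K d s0 q x * F (rcons q x)).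
Proof.
elim: m p => [|m IH] p; first by [].
transitivity (\sum_x K d s0 p x * Ex d s0 (rcons p x) m.+1 F); first by [].
by rewrite [RHS]/=; apply: eq_bigr => x _; rewrite IH.
Qed.

Lemma Ex_tail n p m j F : (forall q, F (take n q) = F q) ->
  (n <= size p + j)%N -> (j <= m)%N -> Ex d s0 p m F = Ex d s0 p j F.
Proof.
move=> hF; elim: j m p => [|j IH] m p hn hj /=.
  apply: Ex_const => q; rewrite -hF -[in RHS]hF; congr F.
  rewrite addn0 in hn; rewrite take_cat; case: ltnP => // h.
  have e : n = size p by apply/eqP; rewrite eqn_leq hn h.
  by rewrite e subnn take0 cats0 take_size.
case: m hj => // m hj /=; apply: eq_bigr => x _; rewrite (IH m) //.
by rewrite size_rcons addSnnS.
Qed.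


Lemma Ex_eq p m F G : (forall q, F q = G q) -> Ex d s0 p m F = Ex d s0 p m G.
Proof. by move=> h; apply: Ex_ext => q _. Qed.
End Ex.

Lemma sum_ind' (R : realType) (I : finType) (c : I) (H : I -> R) :
  \sum_(s : I) H s * (s == c)%:R = H c.
Proof.
rewrite -[RHS](sum_ind c H); apply: eq_bigr => s _; by rewrite mulrC eq_sym.
Qed.

Section Marg.
Context (R : realType) (S O A : finType) (P : pomdp R S O A).
Local Notation X := ((O * A) * S)%type.
Variables (d : hpolicy R O A).
Hypothesis (HP : is_pomdp P) (Hd : is_hpolicy d).

Definition U i (G : S -> seq X -> R) := \sum_s0 p0 P s0 * Ex P d s0 [::] i (G s0).

Lemma U_sum (J : finType) i (F : J -> S -> seq X -> R) :
  U i (fun s0 q => \sum_j F j s0 q) = \sum_j U i (F j).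
Proof.
rewrite /U exchange_big; apply: eq_bigr => s0 _.
by rewrite Ex_sum mulr_sumr.
Qed.

Lemma U_scale i c G : U i (fun s0 q => c * G s0 q) = c * U i G.
Proof.
rewrite /U mulr_sumr; apply: eq_bigr => s0 _; by rewrite Ex_scale mulrCA.
Qed.

Lemma U_ext i F G : (forall s0 q, size q = i -> F s0 q = G s0 q) -> U i F = U i G.
Proof.
move=> h; apply: eq_bigr => s0 _; congr (_ * _); apply: Ex_ext => q hq; exact: h.
Qed.

Lemma U_le i F G : (forall s0 q, F s0 q <= G s0 q) -> U i F <= U i G.
Proof.
case: HP => h0 _ h; apply: ler_sum => s0 _; apply: ler_wpM2l => //; exact: Ex_le.
Qed.

Lemma U_ge0 i F : (forall s0 q, 0 <= F s0 q) -> 0 <= U i F.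
Proof.
case: HP => h0 _ h; apply: sumr_ge0 => s0 _; apply: mulr_ge0 => //; exact: Ex_ge0.
Qed.

Lemma U_rcons i F : U i.+1 F =
  U i (fun s0 q => \sum_x K P d s0 q x * F s0 (rcons q x)).
Proof. apply: eq_bigr => s0 _; by rewrite Ex_rcons. Qed.

Lemma U0 F : U 0 F = \sum_s0 p0 P s0 * F s0 [::].
Proof. by []. Qed.

Lemma U_one i : U i (fun _ _ => 1) = 1.
Proof.
case: HP => _ [h1 _]; rewrite -h1; apply: eq_bigr => s0 _.
by rewrite (@Ex_const _ _ _ _ P d s0 HP Hd _ _ _ 1) ?mulr1.
Qed.

Definition Nu i s := U i (fun s0 q => (cur s0 q == s)%:R).
Definition W i s a := U i (fun s0 q =>
  (cur s0 q == s)%:R * \sum_o pe P s o * d (size q).+1 (hp q) o a).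
Definition mT t s a s' := pt P s a s' * W t.-1 s a.
Definition mO t s o a := pe P s o *
  U t.-1 (fun s0 q => (cur s0 q == s)%:R * d (size q).+1 (hp q) o a).
Definition Gc t s' a' o a := U t.-2 (fun s0 q => (cur s0 q == s')%:R *
  \sum_o' pe P s' o' * d (size q).+1 (hp q) o' a' *
          d (size q).+2 (rcons (hp q) (o', a')) o a).
Definition mC t s' a' s o a := pe P s o * pt P s' a' s * Gc t s' a' o a.

Lemma cur_rcons (s0 : S) (q : seq X) (x : X) : cur s0 (rcons q x) = x.2.
Proof. by rewrite /cur map_rcons last_rcons. Qed.

Lemma d_ge0 t h o a : 0 <= d t h o a.
Proof. by case: (Hd t h o). Qed.
Lemma d_le1 t h o a : d t h o a <= 1.
Proof. by case: (Hd t h o) => h0 h1; apply: le1_of_sum h1. Qed.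
Lemma pe_ge0 s o : 0 <= pe P s o. Proof. by case: HP => _ [_ [h _]]. Qed.
Lemma pt_ge0 s a s' : 0 <= pt P s a s'. Proof. by case: HP => _ [_ [_ [_ [h _]]]]. Qed.
Lemma pe_le1 s o : pe P s o <= 1.
Proof. case: HP => _ [_ [h [h1 _]]]; exact: le1_of_sum (h1 s). Qed.
Lemma pe_sum s : \sum_o pe P s o = 1. Proof. by case: HP => _ [_ [_ [h _]]]. Qed.
Lemma pt_sum s a : \sum_s' pt P s a s' = 1. Proof. by case: HP => _ [_ [_ [_ [_ h]]]]. Qed.
Lemma d_sum t h o : \sum_a d t h o a = 1. Proof. by case: (Hd t h o). Qed.
Lemma ind_ge0 (b : bool) : 0 <= b%:R :> R. Proof. by case: b. Qed.

Lemma Nu0 s : Nu 0 s = p0 P s.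
Proof. by rewrite /Nu U0 /cur /= sum_ind'. Qed.

Lemma NuS i s : Nu i.+1 s = \sum_s'' \sum_a'' pt P s'' a'' s * W i s'' a''.
Proof.
rewrite /Nu U_rcons.
under eq_bigr do under eq_bigr do rewrite /W -U_scale.
under eq_bigr do rewrite -U_sum.
rewrite -U_sum; apply: U_ext => s0 q _.
under eq_bigr do rewrite cur_rcons.
rewrite sum_pair sum_pair /=.
under eq_bigr do under eq_bigr do rewrite sum_ind'.
under [RHS]eq_bigr do under eq_bigr do rewrite mulrCA.
under [RHS]eq_bigr do rewrite -mulr_sumr.
rewrite sum_ind exchange_big; apply: eq_bigr => a _.
rewrite mulr_sumr; apply: eq_bigr => o _; rewrite /K /=; ring.
Qed.

Lemma sum_mT t s a : \sum_sb mT t s a sb = W t.-1 s a.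
Proof. by rewrite /mT -mulr_suml pt_sum mul1r. Qed.

Lemma sum_mO_o t s a : \sum_o mO t s o a = W t.-1 s a.
Proof.
rewrite /W; under eq_bigr do rewrite /mO -U_scale.
rewrite -U_sum; apply: U_ext => s0 q _; rewrite mulr_sumr; apply: eq_bigr => o _; ring.
Qed.

Lemma sum_mO_a t s o : \sum_a mO t s o a = pe P s o * Nu t.-1 s.
Proof.
rewrite -mulr_sumr; congr (_ * _); rewrite -U_sum; apply: U_ext => s0 q _.
by rewrite -mulr_sumr d_sum mulr1.
Qed.

Lemma sum_mO t s : \sum_o \sum_a mO t s o a = Nu t.-1 s.
Proof. under eq_bigr do rewrite sum_mO_a; by rewrite -mulr_suml pe_sum mul1r. Qed.

Lemma nuv_m t s : (0 < t)%N -> nuv (p0 P) mT t s = Nu t.-1 s.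
Proof.
case: t => [|[|k]] // _; first by rewrite /nuv /= Nu0.
by rewrite /nuv /= NuS.
Qed.

Lemma Nu_ge0 i s : 0 <= Nu i s.
Proof. by apply: U_ge0 => s0 q; exact: ind_ge0. Qed.

Lemma W_ge0 i s a : 0 <= W i s a.
Proof.
apply: U_ge0 => s0 q; apply: mulr_ge0; first exact: ind_ge0.
by apply: sumr_ge0 => o _; apply: mulr_ge0; [exact: pe_ge0|exact: d_ge0].
Qed.

Lemma mT_ge0 t s a s' : 0 <= mT t s a s'.
Proof. by apply: mulr_ge0; [exact: pt_ge0| exact: W_ge0]. Qed.

Lemma mO_ge0 t s o a : 0 <= mO t s o a.
Proof.
apply: mulr_ge0; first exact: pe_ge0.
by apply: U_ge0 => s0 q; apply: mulr_ge0; [exact: ind_ge0|exact: d_ge0].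
Qed.

Lemma mO_le t s o a : mO t s o a <= pe P s o * Nu t.-1 s.
Proof.
apply: ler_wpM2l; first exact: pe_ge0.
apply: U_le => s0 q; rewrite -[X in _ <= X]mulr1.
by apply: ler_wpM2l; [exact: ind_ge0| exact: d_le1].
Qed.

Lemma sum_Nu i : \sum_s Nu i s = 1.
Proof.
rewrite -U_sum -[RHS](U_one i); apply: U_ext => s0 q _.
rewrite (eq_bigr (fun s => (cur s0 q == s)%:R * 1)) ?sum_ind //.
by move=> s _; rewrite mulr1.
Qed.

Lemma Nu_le1 i s : Nu i s <= 1.
Proof. apply: le1_of_sum (sum_Nu i) => j; exact: Nu_ge0. Qed.

Lemma Gc_ge0 t s' a' o a : 0 <= Gc t s' a' o a.
Proof.
apply: U_ge0 => s0 q; apply: mulr_ge0; first exact: ind_ge0.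
apply: sumr_ge0 => o' _; apply: mulr_ge0; last exact: d_ge0.
by apply: mulr_ge0; [exact: pe_ge0|exact: d_ge0].
Qed.

Lemma mC_ge0 t s' a' s o a : 0 <= mC t s' a' s o a.
Proof.
by apply: mulr_ge0; [apply: mulr_ge0; [exact: pe_ge0|exact: pt_ge0]|exact: Gc_ge0].
Qed.

Lemma sum_X_ind (F : X -> R) s :
  \sum_(x : X) F x * (x.2 == s)%:R = \sum_o \sum_a F ((o, a), s).
Proof.
rewrite sum_pair sum_pair; apply: eq_bigr => o _; apply: eq_bigr => a _.
exact: sum_ind'.
Qed.

Lemma C1 k s o a : \sum_s' \sum_a' mC k.+2 s' a' s o a = mO k.+2 s o a.
Proof.
rewrite /mO /= U_rcons.
under eq_bigr do under eq_bigr do rewrite /mC -mulrA.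
under eq_bigr do rewrite -mulr_sumr.
rewrite -mulr_sumr; congr (_ * _).
under eq_bigr do under eq_bigr do rewrite /Gc /= -U_scale.
under eq_bigr do rewrite -U_sum.
rewrite -U_sum; apply: U_ext => s0 q _.
rewrite [RHS](eq_bigr (fun x => (K P d s0 q x * d (size q).+2 (rcons (hp q) x.1) o a) * (x.2 == s)%:R)); last first.
  by move=> x _; rewrite cur_rcons size_rcons /hp map_rcons; ring.
rewrite sum_X_ind.
under eq_bigr do under eq_bigr do rewrite mulrCA.
under eq_bigr do rewrite -mulr_sumr.
rewrite sum_ind exchange_big; apply: eq_bigr => a' _.
rewrite mulr_sumr; apply: eq_bigr => o' _; rewrite /K /=; ring.
Qed.

Lemma C2 k s' a' s o : \sum_a mC k.+2 s' a' s o a = pe P s o * mT k.+1 s' a' s.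
Proof.
rewrite /mT /mC -mulr_sumr -mulrA; congr (_ * _); congr (_ * _).
rewrite /Gc /W -U_sum /=; apply: U_ext => s0 q _.
rewrite -mulr_sumr; congr (_ * _); rewrite exchange_big; apply: eq_bigr => o' _.
by rewrite -mulr_sumr d_sum mulr1.
Qed.

Lemma C3 k s' a' s o a :
  mC k.+2 s' a' s o a = pcond P s' a' o s * \sum_sb mC k.+2 s' a' sb o a.
Proof.
rewrite /mC /pcond -mulr_suml.
set D := \sum_sb pe P sb o * pt P s' a' sb.
have [D0|Dn0] := eqVneq D 0.
  have : pe P s o * pt P s' a' s = 0.
    move/eqP: D0; rewrite psumr_eq0; last by move=> i _; apply: mulr_ge0; [exact: pe_ge0|exact: pt_ge0].
    by move/allP/(_ s (mem_index_enum _)) => /= /eqP.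
  by move=> ->; rewrite !mul0r.
by rewrite mulrA divfK.
Qed.
End Marg.
From HB Require Import structures.
From mathcomp Require Import all_boot all_order all_algebra.
From mathcomp Require Import classical_sets reals.
From mathcomp Require Import lra ring.
Set Implicit Arguments. Unset Strict Implicit. Unset Printing Implicit Defensive.
Import Order.TTheory GRing.Theory Num.Theory.
Local Open Scope ring_scope.

Section Ffun.
Context (R : realType).

Definition fcons (X' : finType) n (x : X') (g : {ffun 'I_n -> X'}) : {ffun 'I_n.+1 -> X'} :=
  [ffun i => if unlift ord0 i is Some j then g j else x].

Lemma fcons0 (X' : finType) n x (g : {ffun 'I_n -> X'}) : fcons x g ord0 = x.
Proof. by rewrite ffunE unlift_none. Qed.

Lemma fconsS (X' : finType) n x (g : {ffun 'I_n -> X'}) i : fcons x g (lift ord0 i) = g i.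
Proof. by rewrite ffunE liftK. Qed.

Lemma sum_fcons (X' : finType) n (F : {ffun 'I_n.+1 -> X'} -> R) :
  \sum_g F g = \sum_x \sum_(g' : {ffun 'I_n -> X'}) F (fcons x g').
Proof.
rewrite pair_big /=.
have bij : bijective (fun p : X' * {ffun 'I_n -> X'} => fcons p.1 p.2).
  exists (fun g : {ffun 'I_n.+1 -> X'} => ((g ord0 : X'), ([ffun j => g (lift ord0 j)] : {ffun 'I_n -> X'}))).
    move=> [x g] /=; rewrite fcons0; congr pair; apply/ffunP => j.
    by rewrite ffunE fconsS.
  move=> g; apply/ffunP => i; rewrite ffunE /=.
  by case: unliftP => [j ->|->]; rewrite ?ffunE.
by rewrite (reindex _ (onW_bij _ bij)).
Qed.

Lemma sum_zip (I A1 A2 : finType) (F : {ffun I -> A1} -> {ffun I -> A2} -> R) :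
  \sum_f1 \sum_f2 F f1 f2 =
  \sum_(g : {ffun I -> A1 * A2}) F [ffun i => (g i).1] [ffun i => (g i).2].
Proof.
rewrite pair_big /=.
have bij : bijective (fun g : {ffun I -> A1 * A2} =>
   ([ffun i => (g i).1], [ffun i => (g i).2])).
  exists (fun p : {ffun I -> A1} * {ffun I -> A2} => [ffun i => (p.1 i, p.2 i)]).
    by move=> g; apply/ffunP => i; rewrite !ffunE; case: (g i).
  by move=> [f1 f2] /=; congr pair; apply/ffunP => i; rewrite !ffunE.
by rewrite (reindex _ (onW_bij _ bij)).
Qed.

Lemma codom_fcons (X' : finType) n x (g : {ffun 'I_n -> X'}) :
  codom (fcons x g) = x :: codom g.
Proof.
rewrite !codomE enum_ordSl /= fcons0 -map_comp; congr cons.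
by apply: eq_map => j; rewrite /= fconsS.
Qed.

Lemma nth_codom_ord (X' : finType) n x0 (g : {ffun 'I_n -> X'}) (j : 'I_n) :
  nth x0 (codom g) j = g j.
Proof. by rewrite codomE (nth_map j) ?size_enum_ord // nth_ord_enum. Qed.
End Ffun.

Section Bridge.
Context (R : realType) (S O A : finType) (P : pomdp R S O A).
Local Notation X := ((O * A) * S)%type.

Lemma GL (d : hpolicy R O A) (s0 : S) n (p : seq X) (F : seq X -> R) :
  \sum_(g : {ffun 'I_n -> X})
     (\prod_(i < n) K P d s0 (p ++ take i (codom g)) (g i)) * F (p ++ codom g)
  = Ex P d s0 p n F.
Proof.
elim: n p => [|n IH] p.
  rewrite (eq_bigr (fun _ => F p)); first by rewrite sumr_const card_ffun card_ord expn0 mulr1n.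
  move=> g _; rewrite big_ord0 mul1r.
  have : size (codom g) = 0%N by rewrite size_codom card_ord.
  by case: (codom g) => // _; rewrite cats0.
rewrite sum_fcons /=; apply: eq_bigr => x _.
rewrite -(IH (rcons p x)) mulr_sumr; apply: eq_bigr => g _.
rewrite big_ord_recl codom_fcons fcons0 /= cats0 -mulrA; congr (_ * _).
rewrite -cat_rcons; congr (_ * _); apply: eq_bigr => i _.
by rewrite fconsS add0n -cat_rcons.
Qed.
Definition Rw (i : nat) (s0 : S) (q : seq X) : R :=
  if drop i q is x :: _ then rw P (cur s0 (take i q)) x.1.2 x.2 else 0.

Lemma filter_take_ord T (i : 'I_T) :
  [seq j : 'I_T <- enum 'I_T | (j < i)%N] = take i (enum 'I_T).
Proof.
apply: (@inj_map _ _ (@nat_of_ord T) (@ord_inj T)).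
have h1 : map (@nat_of_ord T) (filter (fun j : 'I_T => (j < i)%N) (enum 'I_T)) =
   filter (fun n => (n < i)%N) (map (@nat_of_ord T) (enum 'I_T)) by rewrite filter_map.
rewrite h1 map_take val_enum_ord take_iota.
rewrite (filter_iota_ltn 0 (ltnW (ltn_ord i))).
by rewrite (minn_idPl (ltnW (ltn_ord i))).
Qed.

Lemma his_bridge T (d : hpolicy R O A) :
  his_value P T d = U P d T (fun s0 q => \sum_(i < T) Rw i s0 q).
Proof.
rewrite /his_value /U sum_fcons; apply: eq_bigr => s0 _.
under eq_bigr => g2 _ do rewrite sum_zip.
rewrite exchange_big sum_zip -GL mulr_sumr; apply: eq_bigr => g _.
set c := codom g.
have hsz : size c = T by rewrite size_codom card_ord.
have hss : forall i : 'I_T.+1, fcons s0 [ffun j => (g j).2] i = cur s0 (take i c).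
  move=> i; case: (unliftP ord0 i) => [j ->|->]; last by rewrite fcons0 take0.
  rewrite fconsS ffunE lift0 (take_nth (g j)) ?hsz //.
  by rewrite nth_codom_ord cur_rcons.
rewrite /traj_prob /traj_reward fcons0 -mulrA; congr (_ * _); congr (_ * _).
  apply: eq_bigr => i _; rewrite /K /= fconsS !hss /= !ffunE /=.
  rewrite size_takel ?hsz ?(ltnW (ltn_ord i)) //; congr (_ * _ * d _ _ _ _).
  have -> : hp (take i c) = map (fun j => (g j).1) (take i (enum 'I_T)).
    by rewrite /hp /c codomE -map_take -map_comp.
  rewrite /hist filter_take_ord.
  by apply: eq_map => j /=; rewrite !ffunE; case: (g j) => -[].
apply: eq_bigr => i _; rewrite fconsS hss !ffunE /=.
by rewrite /Rw (drop_nth (g i)) ?hsz // nth_codom_ord.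
Qed.
End Bridge.

Section Obj.
Context (R : realType) (S O A : finType) (P : pomdp R S O A) (T : nat).
Local Notation X := ((O * A) * S)%type.
Variables (d : hpolicy R O A).
Hypothesis (HP : is_pomdp P) (Hd : is_hpolicy d).

Lemma Rw_take i (s0 : S) (q : seq X) : Rw P i s0 (take i.+1 q) = Rw P i s0 q.
Proof.
rewrite /Rw; case E: (drop i q) => [|x r].
  have : size (drop i q) = 0%N by rewrite E.
  rewrite size_drop => /eqP; rewrite subn_eq0 => h.
  by rewrite (take_oversize (leq_trans h (leqnSn i))) E.
have hs : size (take i q) = i.
  apply: size_takel; have : size (drop i q) = (size r).+1 by rewrite E.
  by rewrite size_drop => h; apply/ltnW; rewrite -subn_gt0 h.
have hq : q = take i q ++ x :: r by rewrite -E cat_take_drop.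
have -> : take i.+1 q = take i q ++ [:: x].
  by rewrite {1}hq take_cat hs ltnNge leqnSn /= subSnn /= take0.
by rewrite drop_size_cat // take_size_cat.
Qed.

Lemma obj_term (i : nat) : (i < T)%N ->
  \sum_s \sum_a \sum_s' rw P s a s' * mT P d i.+1 s a s' = U P d T (Rw P i).
Proof.
move=> hi.
transitivity (U P d i (fun s0 q => \sum_x K P d s0 q x * rw P (cur s0 q) x.1.2 x.2)).
  under eq_bigr do under eq_bigr do under eq_bigr do rewrite /mT /= /W mulrA -U_scale.
  under eq_bigr do under eq_bigr do rewrite -U_sum.
  under eq_bigr do rewrite -U_sum.
  rewrite -U_sum; apply: U_ext => s0 q _.
  under eq_bigr do under eq_bigr do under eq_bigr do rewrite mulrCA.
  under eq_bigr do under eq_bigr do rewrite -mulr_sumr.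
  under eq_bigr do rewrite -mulr_sumr.
  rewrite sum_ind sum_pair sum_pair [RHS]exchange_big; apply: eq_bigr => a _.
  rewrite [RHS]exchange_big; apply: eq_bigr => s' _.
  rewrite mulr_sumr; apply: eq_bigr => o _; rewrite /K /=; ring.
transitivity (U P d i.+1 (Rw P i)).
  rewrite U_rcons; apply: U_ext => s0 q hq; apply: eq_bigr => x _; congr (_ * _).
  by rewrite /Rw -cats1 drop_size_cat // take_size_cat.
apply: eq_bigr => s0 _; congr (_ * _); symmetry.
apply: (@Ex_tail _ _ _ _ P d s0 HP Hd i.+1) => //; exact: Rw_take.
Qed.

Lemma obj_m : objective P T (mT P d) = U P d T (fun s0 q => \sum_(i < T) Rw P i s0 q).
Proof.
rewrite U_sum /objective big_add1 /= big_mkord; apply: eq_bigr => i _.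
exact: obj_term (ltn_ord i).
Qed.

Lemma his_obj : his_value P T d = objective P T (mT P d).
Proof. by rewrite obj_m his_bridge. Qed.
End Obj.
From HB Require Import structures.
From mathcomp Require Import all_boot all_order all_algebra.
From mathcomp Require Import classical_sets reals.
From mathcomp Require Import lra ring.
Set Implicit Arguments. Unset Strict Implicit. Unset Printing Implicit Defensive.
Import Order.TTheory GRing.Theory Num.Theory.
Local Open Scope ring_scope.

Section Del.
Context (R : realType) (S A : finType).

Definition delf (m : S -> A -> R) (a : A) : R :=
  let D := \sum_a' \sum_s m s a' in
  if D == 0 then #|A|%:R^-1 else (\sum_s m s a) / D.

Lemma del_lemma (m : S -> A -> R) (q : S -> R) :
  (0 < #|A|)%N -> (forall s a, 0 <= m s a) -> (forall s, \sum_a m s a = q s) ->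
  \sum_s q s <= 1 ->
  (forall a, 0 <= delf m a /\ delf m a <= 1) /\ \sum_a delf m a = 1 /\
  (forall s a, m s a <= delf m a) /\ (forall s a, q s + delf m a - 1 <= m s a).
Proof.
move=> hA hm hq h1.
set N := fun a => \sum_s m s a.
set D := \sum_a' \sum_s m s a'.
have hD : D = \sum_s q s.
  by rewrite /D exchange_big; apply: eq_bigr => s _; rewrite hq.
have hN0 a : 0 <= N a by apply: sumr_ge0 => s _.
have hmN s a : m s a <= N a.
  by rewrite /N (bigD1 s) //= lerDl; apply: sumr_ge0 => s' _.
have hND a : N a <= D.
  by rewrite /D (bigD1 a) //= lerDl; apply: sumr_ge0 => a' _; exact: hN0.
have hD1 : D <= 1 by rewrite hD.
have hD0 : 0 <= D by apply: sumr_ge0 => a _; exact: hN0.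
have key s a : q s - m s a <= D - N a.
  have : N a - m s a <= \sum_a' (N a' - m s a').
    rewrite (bigD1 a) //= lerDl; apply: sumr_ge0 => a' _; rewrite subr_ge0; exact: hmN.
  move=> h; rewrite sumrB in h; have eD : \sum_a' N a' = D by [].
  rewrite -hq; lra.
have hA' : (#|A|%:R : R) != 0 by rewrite pnatr_eq0 -lt0n.
have hAi : 0 <= (#|A|%:R : R)^-1 <= 1.
  rewrite invr_ge0 ler0n /= invf_le1 ?ltr0n // ler1n //.
have hqD s : q s <= D.
  by rewrite -hq; apply: ler_sum => a _; exact: hmN.
rewrite /delf -/D; have [D0|Dn0] := eqVneq D 0.
  split; first by move=> a; case/andP: hAi.
  split; first by rewrite sumr_const (_ : #|xpredT| = #|A|) ?(@eq_card A xpredT A) // -[_ *+ #|A|]mulr_natr mulVf.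
  split => s a.
    by apply: (le_trans (hmN s a)); apply: (le_trans (hND a)); rewrite D0; case/andP: hAi.
  have := hqD s; have := hm s a; case/andP: hAi; rewrite D0 => ? ? ? ?; lra.
have Dp : 0 < D by rewrite lt_def Dn0 hD0.
split.
  move=> a /=; split; first by apply: divr_ge0; [exact: hN0|exact: hD0].
  by rewrite ler_pdivrMr // mul1r; exact: hND.
split; first by rewrite -mulr_suml mulfV.
split => s a.
  apply: (le_trans (hmN s a)); rewrite ler_pdivlMr //.
  by rewrite -[X in _ <= X]mulr1 ler_wpM2l.
have e : 1 - N a / D = (D - N a) / D by field.
have f : D - N a <= (D - N a) / D.
  by rewrite ler_pdivlMr // -[X in _ <= X]mulr1 ler_wpM2l // subr_ge0.
have := key s a; rewrite /= -/(N a); lra.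
Qed.
End Del.

Lemma cardA_pos (R : realType) (A : finType) (F : A -> R) :
  \sum_a F a != 0 -> (0 < #|A|)%N.
Proof.
case: (pickP (@predT A)) => [a0 _|h]; first by move=> _; apply/card_gt0P; exists a0.
by rewrite big_pred0 ?eqxx // => a; exact: h.
Qed.

Lemma le_sum1 (R : realType) (I : finType) (f : I -> R) i :
  (forall j, 0 <= f j) -> f i <= \sum_j f j.
Proof. by move=> h; rewrite (bigD1 i) //= lerDl; apply: sumr_ge0 => j _. Qed.

Section LP.
Context (R : realType) (S O A : finType) (P : pomdp R S O A) (T : nat).
Hypothesis (HP : is_pomdp P) (HT : (0 < T)%N).

Lemma R_to_MDP mu1 muO muT del : milp_feasible P T false mu1 muO muT del ->
  mdp_feasible P T mu1 muT.
Proof.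
case=> h0 [hp hf]; split => //; split => //; split.
  by move=> t ht; case: (hf t ht) => _ [_ [_ [h _]]].
split.
  move=> s; have h1 : (1 <= 1 <= T)%N by rewrite leqnn HT.
  case: (hf 1%N h1) => _ [_ [_ [_ [hn [hs _]]]]].
  rewrite -[RHS]/(nuv mu1 muT 1 s) -hn [RHS]exchange_big; apply: eq_bigr => a _; exact: hs.
split.
  move=> t /andP [h2 h3] s; have ht : (1 <= t <= T)%N by rewrite h3 (ltnW h2).
  case: (hf t ht) => _ [_ [_ [_ [hn [hs _]]]]].
  have : nuv mu1 muT t s = \sum_s'' \sum_a'' muT t.-1 s'' a'' s.
    by rewrite /nuv; case: eqP => // e; rewrite e in h2.
  move=> <-; rewrite -hn [RHS]exchange_big; apply: eq_bigr => a _; exact: hs.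
by move=> t ht; case: (hf t ht) => _ [_ [_ [_ [_ [_ [h _]]]]]].
Qed.

Lemma mdp_nuv nu1 nuT t s : mdp_feasible P T nu1 nuT -> (1 <= t <= T)%N ->
  nuv nu1 nuT t s = \sum_a \sum_s' nuT t s a s'.
Proof.
case=> _ [_ [_ [h1 [h2 _]]]] /andP [ht1 ht2]; rewrite /nuv.
case: eqP => [->|e]; first by rewrite h1.
by rewrite h2 // ht2 andbT ltn_neqAle ht1 andbT eq_sym; apply/eqP.
Qed.

Lemma mdp_mass nu1 nuT t : mdp_feasible P T nu1 nuT -> (1 <= t <= T)%N ->
  \sum_s \sum_a \sum_s' nuT t s a s' = 1.
Proof.
move=> hm; elim: t => // t IH /andP [_ ht].
have := hm => -[_ [hp [_ [h1 [h2 _]]]]].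
case: t IH ht => [|t] IH ht.
  have hs1 : \sum_s p0 P s = 1 by case: HP => _ [].
  rewrite -[RHS]hs1; apply: eq_bigr => s _; by rewrite h1 hp.
rewrite -[RHS](IH (ltnW ht)).
rewrite (eq_bigr (fun s => \sum_s'' \sum_a'' nuT t.+1 s'' a'' s)); last first.
  by move=> s _; rewrite h2 // ht.
rewrite exchange_big; apply: eq_bigr => s'' _; by rewrite exchange_big.
Qed.

Lemma mdp_le1 nu1 nuT t s a s' : mdp_feasible P T nu1 nuT -> (1 <= t <= T)%N ->
  nuT t s a s' <= 1.
Proof.
move=> hm ht; have [_ [_ [h0 _]]] := hm.
rewrite -(mdp_mass hm ht).
apply: (le_trans _ (le_sum1 s _)); last by move=> j; do 2 (apply: sumr_ge0 => ? _); exact: h0.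
apply: (le_trans _ (le_sum1 a _)); last by move=> j; apply: sumr_ge0 => ? _; exact: h0.
apply: le_sum1 => j; exact: h0.
Qed.

Definition muO_of (nuT : nat -> S -> A -> S -> R) t s o a := pe P s o * \sum_s' nuT t s a s'.
Definition del_of (nuT : nat -> S -> A -> S -> R) t o a := delf (fun s a => muO_of nuT t s o a) a.

Lemma MDP_to_R nu1 nuT : mdp_feasible P T nu1 nuT ->
  milp_feasible P T false nu1 (muO_of nuT) nuT (del_of nuT).
Proof.
move=> hm; have := hm => -[h0 [hp [hT0 [h1 [h2 h3]]]]].
have pe0 s o : 0 <= pe P s o by case: HP => _ [_ [h _]].
have pe1 s o : pe P s o <= 1 by case: HP => _ [_ [h [h' _]]]; exact: le1_of_sum (h' s).
have pes s : \sum_o pe P s o = 1 by case: HP => _ [_ [_ [h _]]].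
have hA : (0 < #|A|)%N.
  apply: (cardA_pos (F := fun a => \sum_s \sum_s' nuT 1%N s a s')).
  rewrite exchange_big (eq_bigr _ (fun s _ => h1 s)).
  rewrite (eq_bigr _ (fun s _ => hp s)); case: HP => _ [-> _]; exact: oner_neq0.
split => //; split => // t ht.
have nu0 s : 0 <= nuv nu1 nuT t s.
  by rewrite (mdp_nuv _ hm ht); do 2 (apply: sumr_ge0 => ? _); exact: hT0.
have hq o s : \sum_a muO_of nuT t s o a = pe P s o * nuv nu1 nuT t s.
  by rewrite /muO_of -mulr_sumr (mdp_nuv _ hm ht).
have hO0 s o a : 0 <= muO_of nuT t s o a.
  by apply: mulr_ge0 => //; apply: sumr_ge0 => ? _; exact: hT0.
have hq1 o : \sum_s pe P s o * nuv nu1 nuT t s <= 1.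
  rewrite -(mdp_mass hm ht); apply: ler_sum => s _.
  rewrite -(mdp_nuv _ hm ht) -[X in _ <= X]mul1r; exact: ler_wpM2r.
have DL o := del_lemma (m := fun s a => muO_of nuT t s o a) hA (hO0^~ o) (hq o) (hq1 o).
split; first by move=> o a; case: (DL o) => [h _]; exact: h.
split; first by move=> o; case: (DL o) => [_ [h _]]; exact: h.
split; first exact: hO0.
split; first exact: hT0.
split.
  move=> s; rewrite (eq_bigr _ (fun o _ => hq o s)).
  by rewrite -mulr_suml pes mul1r.
split; first by move=> s a; rewrite /muO_of -mulr_suml pes mul1r.
split; first exact: h3.
split; first by move=> s o a; rewrite -hq; apply: (le_sum1 a) => j; exact: hO0.
split; first by move=> s o a; case: (DL o) => [_ [_ [h _]]]; exact: h.
by move=> s o a; case: (DL o) => [_ [_ [_ h]]]; exact: h.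
Qed.
End LP.
From HB Require Import structures.
From mathcomp Require Import all_boot all_order all_algebra.
From mathcomp Require Import boolp classical_sets reals.
From mathcomp Require Import lra ring.
Set Implicit Arguments. Unset Strict Implicit. Unset Printing Implicit Defensive.
Import Order.TTheory GRing.Theory Num.Theory.
Local Open Scope ring_scope.

Section Main.
Context (R : realType) (S O A : finType) (P : pomdp R S O A) (T : nat).
Hypothesis (HP : is_pomdp P) (HT : (0 < T)%N).

Lemma his_Rc (d : hpolicy R O A) : is_hpolicy d ->
  exists mu1 muO muT del muC, milp_feasible P T false mu1 muO muT del /\
    rc_extra P T muO muT muC /\ his_value P T d = objective P T muT.
Proof.
move=> Hd.
exists (p0 P), (mO P d), (mT P d), (fun t o a => delf (fun s a => mO P d t s o a) a), (mC P d).
have hA : (0 < #|A|)%N.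
  apply: (cardA_pos (F := fun a => \sum_s \sum_o mO P d 1 s o a)).
  have -> : \sum_a \sum_s \sum_o mO P d 1 s o a = 1.
    rewrite exchange_big -[RHS](sum_Nu HP Hd 0); apply: eq_bigr => s _.
    by rewrite exchange_big (sum_mO HP Hd 1 s).
  exact: oner_neq0.
split.
  split; first by move=> s; case: HP => h _.
  split => // t ht.
  have t0 : (0 < t)%N by case/andP: ht.
  have hnu s : nuv (p0 P) (mT P d) t s = Nu P d t.-1 s by exact: nuv_m.
  have hq o s : \sum_a mO P d t s o a = pe P s o * Nu P d t.-1 s by exact: sum_mO_a.
  have hq1 o : \sum_s pe P s o * Nu P d t.-1 s <= 1.
    rewrite -(sum_Nu HP Hd t.-1); apply: ler_sum => s _.
    rewrite -[X in _ <= X]mul1r; apply: ler_wpM2r; [exact: Nu_ge0|exact: pe_le1].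
  have DL o := del_lemma (m := fun s a => mO P d t s o a) hA
     (fun s a => mO_ge0 HP Hd t s o a) (hq o) (hq1 o).
  split; first by move=> o a; case: (DL o) => [h _]; exact: h.
  split; first by move=> o; case: (DL o) => [_ [h _]]; exact: h.
  split; first exact: mO_ge0.
  split; first exact: mT_ge0.
  split; first by move=> s; rewrite hnu; exact: sum_mO.
  split; first by move=> s a; rewrite sum_mT // sum_mO_o.
  split; first by move=> s a s'; rewrite sum_mT.
  split; first by move=> s o a; rewrite hnu; exact: mO_le.
  split; first by move=> s o a; case: (DL o) => [_ [_ [h _]]]; exact: h.
  by move=> s o a; rewrite hnu; case: (DL o) => [_ [_ [_ h]]]; exact: h.
split; last exact: his_obj.
move=> t /andP [h2 h3]; case: t h2 h3 => [|[|k]] // _ _.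
split; first exact: mC_ge0.
split; first exact: C1.
split; first by move=> s' a' s o; rewrite C2.
by move=> s' a' s o a; rewrite C3.
Qed.

Lemma milp_his mu1 muO muT del : milp_feasible P T true mu1 muO muT del ->
  exists d : hpolicy R O A, is_hpolicy d /\ objective P T muT = his_value P T d.
Proof.
move=> hf; have [h0 [hp hf']] := hf.
pose cl t := if (1 <= t <= T)%N then t else 1%N.
have hcl t : (1 <= cl t <= T)%N by rewrite /cl; case: ifP => //; rewrite leqnn HT.
pose d : hpolicy R O A := fun t h o a => del (cl t) o a.
have Hd : is_hpolicy d.
  move=> t h o; case: (hf' _ (hcl t)) => hint [hsum _]; split; last exact: hsum.
  by move=> a; rewrite /d; case: (hint o a) => ->.
exists d; split => //.
have step t : (1 <= t <= T)%N -> (forall s, nuv mu1 muT t s = Nu P d t.-1 s) ->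
    forall s a s', muT t s a s' = mT P d t s a s'.
  move=> ht hn s a s'.
  have [hint [_ [hO0 [_ [_ [hs [hpt [m1 [m2 m3]]]]]]]]] := hf' t ht.
  have hO o : muO t s o a = pe P s o * Nu P d t.-1 s * del t o a.
    have := m1 s o a; have := m2 s o a; have := m3 s o a; have := hO0 s o a.
    rewrite hn; case: (hint o a) => ->; rewrite ?mulr0 ?mulr1 => *; lra.
  rewrite hpt hs /mT; congr (_ * _).
  have -> : W P d t.-1 s a = U P d t.-1 (fun s0 q =>
      (\sum_o pe P s o * del t o a) * (cur s0 q == s)%:R).
    apply: U_ext => s0 q hq; rewrite mulrC; congr (_ * _); apply: eq_bigr => o _.
    by rewrite /d hq prednK ?(proj1 (andP ht)) // /cl ht.
  rewrite U_scale mulr_suml; apply: eq_bigr => o _; rewrite hO /Nu; ring.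
have key t : (1 <= t <= T)%N -> forall s, nuv mu1 muT t s = Nu P d t.-1 s.
  elim: t => // t IH /andP [_ ht] s.
  case: t IH ht => [|t] IH ht; first by rewrite /nuv /= hp Nu0.
  have ht' : (1 <= t.+1 <= T)%N by exact: (ltnW ht).
  rewrite /nuv /= NuS; apply: eq_bigr => s'' _; apply: eq_bigr => a'' _.
  by rewrite (step _ ht' (IH ht')).
rewrite (his_obj T HP Hd) /objective; apply: eq_big_nat => t ht.
apply: eq_bigr => s _; apply: eq_bigr => a _; apply: eq_bigr => s' _.
by rewrite (step _ ht (key _ ht)).
Qed.

Lemma milp_nonempty (a0 : A) :
  exists mu1 muO muT del, milp_feasible P T true mu1 muO muT del.
Proof.
pose d : hpolicy R O A := fun t h o a => (a == a0)%:R.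
have hs1 : \sum_a (a == a0)%:R = 1 :> R.
  by rewrite (eq_bigr (fun a => 1 * (a == a0)%:R)) ?sum_ind' // => a _; rewrite mul1r.
have Hd : is_hpolicy d by move=> t h o; split => // a; exact: ind_ge0.
have hO t s o a : mO P d t s o a = (a == a0)%:R * (pe P s o * Nu P d t.-1 s).
  rewrite /mO mulrCA; congr (_ * _).
  rewrite -U_scale; apply: U_ext => s0 q _; exact: mulrC.
exists (p0 P), (mO P d), (mT P d), (fun t o a => (a == a0)%:R).
split; first by move=> s; case: HP => h _.
split => // t ht.
have t0 : (0 < t)%N by case/andP: ht.
have hnu s : nuv (p0 P) (mT P d) t s = Nu P d t.-1 s by exact: nuv_m.
split; first by move=> o a; case: (a == a0); [right|left].
split; first by move=> o.
split; first exact: mO_ge0.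
split; first exact: mT_ge0.
split; first by move=> s; rewrite hnu; exact: sum_mO.
split; first by move=> s a; rewrite sum_mT // sum_mO_o.
split; first by move=> s a s'; rewrite sum_mT.
split; first by move=> s o a; rewrite hnu; exact: mO_le.
have hpn s o : 0 <= pe P s o * Nu P d t.-1 s <= 1.
  apply/andP; split; first by apply: mulr_ge0; [exact: pe_ge0|exact: Nu_ge0].
  rewrite -[X in _ <= X](mulr1 1); apply: ler_pM; [exact: pe_ge0|exact: Nu_ge0|exact: pe_le1|exact: Nu_le1].
split; move=> s o a; rewrite hO ?hnu; have := hpn s o; case: (a == a0) => /andP [? ?];
  rewrite /= ?mulr1n ?mulr0n ?mul1r ?mul0r; lra.
Qed.
End Main.
From HB Require Import structures.
From mathcomp Require Import all_boot all_order all_algebra.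
From mathcomp Require Import boolp classical_sets reals.
From mathcomp Require Import lra ring.
Import Order.TTheory GRing.Theory Num.Theory.
Local Open Scope ring_scope.

Lemma sup_mono (R : realType) (E F : set R) c :
  (forall x, E x -> F x) -> (exists x, E x) -> (forall x, F x -> x <= c) ->
  sup E <= sup F.
Proof.
move=> hEF [x0 hx0] hc; apply: ge_sup; first by exists x0.
have hub : has_ubound F by exists c => y Fy; exact: hc.
move=> x Ex; have /ubP := ub_le_sup hub; apply; exact: hEF.
Qed.

Lemma sup_empty (R : realType) (E : set R) : (forall x, ~ E x) -> sup E = 0.
Proof.
move=> h; rewrite (_ : E = set0) ?sup0 //; apply/seteqP; split => x //.
by move/h.
Qed.

Unset Implicit Arguments.
Theorem mainTheorem3 (R : realType) (S O A : finType) (P : pomdp R S O A) (T : nat) :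
  is_pomdp P -> (0 < T)%N ->
  (forall mu1 muO muT del, milp_feasible P T false mu1 muO muT del ->
     exists nu1 nuT, mdp_feasible P T nu1 nuT /\ objective P T nuT = objective P T muT) /\
  (forall nu1 nuT, mdp_feasible P T nu1 nuT ->
     exists mu1 muO muT del, milp_feasible P T false mu1 muO muT del /\
       objective P T muT = objective P T nuT) /\
  z_R P T = v_MDP P T /\
  z_MILP P T <= v_his P T /\ v_his P T <= z_Rc P T /\ z_Rc P T <= z_R P T.
Proof.
move=> HP HT.
have P1 : forall mu1 muO muT del, milp_feasible P T false mu1 muO muT del ->
     exists nu1 nuT, mdp_feasible P T nu1 nuT /\ objective P T nuT = objective P T muT.
  by move=> mu1 muO muT del hf; exists mu1, muT; split => //; exact: R_to_MDP hf.
have P2 : forall nu1 nuT, mdp_feasible P T nu1 nuT ->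
     exists mu1 muO muT del, milp_feasible P T false mu1 muO muT del /\
       objective P T muT = objective P T nuT.
  move=> nu1 nuT hm; exists nu1, (muO_of P nuT), nuT, (del_of P nuT); split => //.
  exact: MDP_to_R.
split => //; split => //.
split.
  rewrite /z_R /v_MDP; congr sup; apply/seteqP; split => x /=.
    move=> [mu1 [muO [muT [del [hf ->]]]]].
    by have [nu1 [nuT [hm e]]] := P1 _ _ _ _ hf; exists nu1, nuT; rewrite e.
  move=> [nu1 [nuT [hm ->]]].
  by have [mu1 [muO [muT [del [hf e]]]]] := P2 _ _ hm; exists mu1, muO, muT, del; rewrite e.
rewrite /z_MILP /v_his /z_Rc /z_R.
pose SM : set R := fun x => exists mu1 muO muT del,
  milp_feasible P T true mu1 muO muT del /\ x = objective P T muT.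
pose SH : set R := fun x => exists d, is_hpolicy d /\ x = his_value P T d.
pose SC : set R := fun x => exists mu1 muO muT del muC,
  milp_feasible P T false mu1 muO muT del /\ rc_extra P T muO muT muC /\ x = objective P T muT.
pose SR : set R := fun x => exists mu1 muO muT del,
  milp_feasible P T false mu1 muO muT del /\ x = objective P T muT.
change (sup SM <= sup SH /\ sup SH <= sup SC /\ sup SC <= sup SR).
pose B := \sum_(1 <= t < T.+1) \sum_s \sum_a \sum_s' `|rw P s a s'|.
have hB : forall x, SR x -> x <= B.
  move=> x [mu1 [muO [muT [del [hf ->]]]]].
  have hm := R_to_MDP HT hf; have [_ [_ [h0 _]]] := hm.
  apply: ler_sum_nat => t ht; do 3 (apply: ler_sum => ? _).
  apply: (le_trans (ler_norm _)); rewrite normrM [X in _ * X]ger0_norm ?h0 //.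
  rewrite -[X in _ <= X]mulr1; apply: ler_wpM2l => //; exact: (mdp_le1 HP _ _ _ hm).
have MH : forall x, SM x -> SH x.
  move=> x [mu1 [muO [muT [del [hf ->]]]]].
  by have [d [Hd e]] := milp_his HP HT hf; exists d.
have HC : forall x, SH x -> SC x.
  move=> x [d [Hd ->]].
  have [mu1 [muO [muT [del [muC [h1 [h2 e]]]]]]] := his_Rc T HP Hd.
  by exists mu1, muO, muT, del, muC.
have CR : forall x, SC x -> SR x.
  by move=> x [mu1 [muO [muT [del [muC [h1 [h2 e]]]]]]]; exists mu1, muO, muT, del.
have [[x0 hx0]|hemp] := pselect (exists x, SR x); last first.
  have e : forall E : set R, (forall x, E x -> SR x) -> sup E = 0.
    by move=> E hE; apply: sup_empty => x /hE hx; apply: hemp; exists x.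
  have HR : forall x, SH x -> SR x by move=> x hx; apply: CR; apply: HC.
  have MR : forall x, SM x -> SR x by move=> x hx; apply: HR; apply: MH.
  by rewrite (e SM MR) (e SH HR) (e SC CR) (e SR (fun x h => h)) lexx.
have [mu1 [muO [muT [del [hf _]]]]] := hx0.
have hm := R_to_MDP HT hf; have [_ [hp [_ [h1 _]]]] := hm.
have hA : (0 < #|A|)%N.
  apply: (cardA_pos (F := fun a => \sum_s \sum_s' muT 1%N s a s')).
  rewrite exchange_big (eq_bigr _ (fun s _ => h1 s)).
  rewrite (eq_bigr _ (fun s _ => hp s)); case: HP => _ [-> _]; exact: oner_neq0.
have [a0 _] := card_gt0P hA.
have [m1 [mO [mT [dl hfm]]]] := milp_nonempty T HP a0.
have neM : exists x, SM x by exists (objective P T mT), m1, mO, mT, dl.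
have neH : exists x, SH x by case: neM => x /MH hx; exists x.
have neC : exists x, SC x by case: neH => x /HC hx; exists x.
split; first by apply: (@sup_mono R _ _ B MH neM) => x hx; apply: hB; apply: CR; apply: HC.
split; first by apply: (@sup_mono R _ _ B HC neH) => x hx; apply: hB; apply: CR.
exact: (@sup_mono R _ _ B CR neC hB).
Qed.
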